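(* Let $Z\subset\mathbb{S}_1$ be a finite nonempty set of points. Then the following are equivalent: (i) $Z=\{Q\}$ for a single point $Q\in E_1$; (ii) $\alpha(Z)=\alpha(2Z)=\alpha(3Z)=\alpha(4Z)=\alpha(5Z)=1$.
   Context: Let $P_1\in\mathbb{P}^2(\mathbb{C})$ be a point and $f\colon\mathbb{S}_1\to\mathbb{P}^2$ the blow-up of $\mathbb{P}^2$ at $P_1$, with exceptional curve $E_1=f^{-1}(P_1)$; let $H$ be the pullback of the class of a line. Let $\mathbb{L}_1=3H-E_1=-K_{\mathbb{S}_1}$. For a finite set $Z\subset\mathbb{S}_1$ with ideal sheaf $\mathcal{I}_Z$ and a positive integer $m$, the initial degree is $\alpha(mZ)=\min\{d\ge 0:\ H^0(\mathbb{S}_1,d\mathbb{L}_1\otimes\mathcal{I}_Z^{(m)})\neq 0\}$, i.e. the least $d$ such that some effective divisor $D\in|d\mathbb{L}_1|$ has multiplicity at least $m$ at every point of $Z$. *)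

(* Defs.v *)
From HB Require Import structures.
From mathcomp Require Import all_boot all_order all_algebra.
From mathcomp Require Import complex.
From mathcomp Require Import reals.
From mathcomp Require Import mpoly.
From Stdlib Require List.

Set Implicit Arguments.
Unset Strict Implicit.
Unset Printing Implicit Defensive.

Import Order.TTheory GRing.Theory Num.Theory.
Local Open Scope ring_scope.

(* Points of P^2 are given by nonzero row vectors in C^3 (up to scaling);
   homogeneous polynomials of P^2 are elements of {mpoly C[3]}. *)

Section BlowUp.
Variable C : fieldType.

Definition mx3 (a b c : 'rV[C]_3) : 'M[C]_3 :=
  \matrix_(i < 3, j < 3) (if i == 0 :> nat then a 0 j
                          else if i == 1 :> nat then b 0 j else c 0 j).

Definition basis3 (a b c : 'rV[C]_3) : bool := \det (mx3 a b c) != 0.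

(* two vectors are linearly independent (distinct points of P^2) *)
Definition indep2 (a b : 'rV[C]_3) : bool := \rank (col_mx a b) == 2%N.

Definition homog_deg (F : {mpoly C[3]}) (k : nat) : Prop :=
  forall e : 'X_{1..3}, F@_e != 0 -> mdeg e = k.

Definition affine_sub (F : {mpoly C[3]}) (a u w : 'rV[C]_3) : {mpoly C[2]} :=
  comp_mpoly [tuple (a 0 j)%:MP + (u 0 j)%:MP * 'X_0 + (w 0 j)%:MP * 'X_1 | j < 3] F.

(* The polynomial G(s,t) = F(a + s*v + s*t*w): the standard affine chart of the
   blow-up of P^2 at [a], with exceptional curve {s = 0} and the point (0,0)
   being the point of E corresponding to the tangent direction v at [a]. *)
Definition blowup_sub (F : {mpoly C[3]}) (a v w : 'rV[C]_3) : {mpoly C[2]} :=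
  comp_mpoly [tuple (a 0 j)%:MP + (v 0 j)%:MP * 'X_0 + (w 0 j)%:MP * ('X_0 * 'X_1)
             | j < 3] F.

Definition pmult_ge (F : {mpoly C[3]}) (p : 'rV[C]_3) (m : nat) : Prop :=
  exists u w : 'rV[C]_3, basis3 p u w /\
    forall e : 'X_{1..2}, (affine_sub F p u w)@_e != 0 -> (m <= e 0%R + e 1%R)%N.

(* Points of S_1 = Bl_{[a]} P^2 *)
Inductive spt : Type :=
  | Off of 'rV[C]_3   (* the point f^{-1}([p]) for [p] <> [a] *)
  | OnE of 'rV[C]_3.  (* the point of E_1 given by the tangent direction of the line [a][v] *)

Definition valid_pt (a : 'rV[C]_3) (z : spt) : bool :=
  match z with Off p => indep2 a p | OnE v => indep2 a v end.

Definition same_pt (a : 'rV[C]_3) (z z' : spt) : Prop :=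
  match z, z' with
  | Off p, Off q => \rank (col_mx p q) = 1%N
  | OnE v, OnE u => \rank (col_mx a (col_mx v u)) = 2%N
  | _, _ => False
  end.

(* The effective divisor D = f^*(F = 0) - d E_1 in |d L_1| (where F is homogeneous of
   degree 3d with multiplicity >= d at [a]) has multiplicity at least m at z. *)
Definition dmult_ge (a : 'rV[C]_3) (d : nat) (F : {mpoly C[3]}) (z : spt) (m : nat) : Prop :=
  match z with
  | Off p => pmult_ge F p m
  | OnE v => exists w : 'rV[C]_3, basis3 a v w /\
      forall e : 'X_{1..2}, (blowup_sub F a v w)@_e != 0 ->
        (d <= e 0%R)%N /\ (m <= (e 0%R - d) + e 1%R)%N
  end.

(* Effective divisors in |d L_1| = |d(3H - E_1)| correspond to nonzero F homogeneous
   of degree 3d with multiplicity >= d at P_1 = [a]. *)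
Definition is_section (a : 'rV[C]_3) (d : nat) (F : {mpoly C[3]}) : Prop :=
  F != 0 /\ homog_deg F (3 * d) /\ pmult_ge F a d.

(* H^0(S_1, d L_1 (x) I_Z^(m)) <> 0 *)
Definition has_div (a : 'rV[C]_3) (Z : seq spt) (m d : nat) : Prop :=
  exists F, is_section a d F /\ forall z, List.In z Z -> dmult_ge a d F z m.

Definition alpha_eq (a : 'rV[C]_3) (Z : seq spt) (m k : nat) : Prop :=
  has_div a Z m k /\ forall d, (d < k)%N -> ~ has_div a Z m d.

End BlowUp.

(* Main.v *)
Require Import Defs.
From HB Require Import structures.
From mathcomp Require Import all_boot all_order all_algebra.
From mathcomp Require Import complex reals mpoly.
From Stdlib Require List.
From mathcomp Require Import zify ring lra.
Set Implicit Arguments.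
Unset Strict Implicit.
Unset Printing Implicit Defensive.
Import Order.TTheory GRing.Theory Num.Theory.
Local Open Scope ring_scope.

Section Aux.
Variable C : fieldType.

Lemma comp_comp n k l (F : {mpoly C[n]}) (s : n.-tuple {mpoly C[k]})
  (t : k.-tuple {mpoly C[l]}) :
  (F \mPo s) \mPo t = F \mPo [tuple (tnth s i) \mPo t | i < n].
Proof.
rewrite (mpolyE F); elim: (msupp F) => [|m ms IH].
  by rewrite !big_nil !comp_mpoly0.
rewrite !big_cons !comp_mpolyD IH; congr (_ + _).
rewrite !comp_mpolyZ; congr (_ *: _).
rewrite !comp_mpolyX rmorph_prod /=; apply: eq_bigr => i _.
by rewrite rmorphXn /= tnth_mktuple.
Qed.

Definition lin (M : 'M[C]_3) : 3.-tuple {mpoly C[3]} :=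
  [tuple \sum_(i < 3) M i j *: 'X_i | j < 3].

Lemma lin_comp (M : 'M[C]_3) k (t : 3.-tuple {mpoly C[k]}) j :
  (tnth (lin M) j) \mPo t = \sum_(i < 3) M i j *: tnth t i.
Proof.
rewrite tnth_mktuple raddf_sum /=; apply: eq_bigr => i _.
by rewrite comp_mpolyZ comp_mpolyXU -tnth_nth.
Qed.

Lemma back (M : 'M[C]_3) (F : {mpoly C[3]}) : M \in unitmx ->
  (F \mPo lin M) \mPo lin (invmx M) = F.
Proof.
move=> uM; rewrite comp_comp -[RHS]comp_mpoly_id; congr comp_mpoly.
apply: eq_from_tnth => j; rewrite [LHS]tnth_mktuple lin_comp [RHS]tnth_mktuple.
under eq_bigr => i _ do rewrite tnth_mktuple scaler_sumr.
rewrite exchange_big /=.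
under eq_bigr => k _ do under eq_bigr => i _ do rewrite scalerA.
under eq_bigr => k _ do rewrite -scaler_suml.
have E : forall k, \sum_(i < 3) M i j * invmx M k i = (invmx M *m M) k j.
  by move=> k; rewrite !mxE; apply: eq_bigr => i _; rewrite mulrC.
under eq_bigr => k _ do rewrite E (mulVmx uM) mxE.
rewrite (bigD1 j) //= eqxx scale1r big1 ?addr0 // => k /negPf.
by rewrite eq_sym => ->; rewrite scale0r.
Qed.

Definition t1 : 3.-tuple {mpoly C[2]} := [tuple 1; 'X_0; 'X_1].
Definition t2 : 3.-tuple {mpoly C[2]} := [tuple 1; 'X_0; 'X_0 * 'X_1].

Lemma sum3 (f : 'I_3 -> {mpoly C[2]}) :
  \sum_(i < 3) f i = f ord0 + f (Ordinal (isT : 1 < 3)%N) + f (Ordinal (isT : 2 < 3)%N).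
Proof. rewrite !big_ord_recl big_ord0 addr0 addrA; congr (_ + _ + _); congr f; exact: val_inj. Qed.

Lemma affine_H F p u w :
  affine_sub F p u w = (F \mPo lin (mx3 p u w)) \mPo t1.
Proof.
rewrite comp_comp /affine_sub; congr comp_mpoly.
apply: eq_from_tnth => j; rewrite [LHS]tnth_mktuple [RHS]tnth_mktuple lin_comp sum3 !mxE /=.
by rewrite /t1 /t2 /tnth /= -!mul_mpolyC mulr1.
Qed.

Lemma blowup_H F p u w :
  blowup_sub F p u w = (F \mPo lin (mx3 p u w)) \mPo t2.
Proof.
rewrite comp_comp /blowup_sub; congr comp_mpoly.
apply: eq_from_tnth => j; rewrite [LHS]tnth_mktuple [RHS]tnth_mktuple lin_comp sum3 !mxE /=.
by rewrite /t1 /t2 /tnth /= -!mul_mpolyC mulr1.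
Qed.


Definition i0 : 'I_3 := ord0.
Definition i1 : 'I_3 := Ordinal (isT : 1 < 3)%N.
Definition i2 : 'I_3 := Ordinal (isT : 2 < 3)%N.

Lemma big3 (T : nmodType) (f : 'I_3 -> T) : \sum_(i < 3) f i = f i0 + f i1 + f i2.
Proof. rewrite !big_ord_recl big_ord0 addr0 addrA; congr (_ + _ + _); congr f; exact: val_inj. Qed.

Lemma prod3 (f : 'I_3 -> {mpoly C[2]}) : \prod_(i < 3) f i = f i0 * f i1 * f i2.
Proof. rewrite !big_ord_recl big_ord0 mulr1 mulrA; congr (_ * _ * _); congr f; exact: val_inj. Qed.

Lemma prod3' (f : 'I_3 -> {mpoly C[3]}) : \prod_(i < 3) f i = f i0 * f i1 * f i2.
Proof. rewrite !big_ord_recl big_ord0 mulr1 mulrA; congr (_ * _ * _); congr f; exact: val_inj. Qed.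

Lemma mdeg3 (m : 'X_{1..3}) : mdeg m = (m i0 + m i1 + m i2)%N.
Proof. rewrite mdegE !big_ord_recl big_ord0 addn0 addnA; congr (_ + _ + _)%N; congr (m _); exact: val_inj. Qed.

Lemma homogE' (F : {mpoly C[3]}) k : homog_deg F k <-> F \is k.-homog.
Proof.
split=> h.
  by apply/dhomogP => m; rewrite mcoeff_msupp => /h.
by move=> e; rewrite -mcoeff_msupp => /(dhomogP _ _ _ h) ->.
Qed.

Lemma lin_homog M j : tnth (lin M) j \is 1.-homog.
Proof.
rewrite tnth_mktuple; apply: rpred_sum => i _; apply: rpredZ.
by rewrite dhomogX; apply/eqP; apply: mdeg1.
Qed.

Lemma H_homog (F : {mpoly C[3]}) M : F \is 3.-homog -> F \mPo lin M \is 3.-homog.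
Proof.
move=> hF; rewrite comp_mpolyEX big_seq; apply: rpred_sum => m mF.
apply: rpredZ; rewrite comp_mpolyX prod3'.
have h := dhomogM (dhomogM (dhomogMn (m i0) (lin_homog M i0))
   (dhomogMn (m i1) (lin_homog M i1))) (dhomogMn (m i2) (lin_homog M i2)).
rewrite !mul1n -mdeg3 in h.
have E : mdeg m = 3%N by exact: (dhomogP _ _ _ hF m mF).
by rewrite E in h.
Qed.

Lemma extract n k (H : {mpoly C[n]}) (t : n.-tuple {mpoly C[k]})
   (phi : 'X_{1..n} -> 'X_{1..k}) :
  (forall m, 'X_[m] \mPo t = 'X_[phi m]) ->
  {in msupp H &, injective phi} ->
  forall m, m \in msupp H -> (H \mPo t)@_(phi m) = H@_m.
Proof.
move=> hX inj m mH; rewrite comp_mpolyEX.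
under eq_bigr => m' _ do rewrite hX.
rewrite raddf_sum /= (bigD1_seq m) ?msupp_uniq //= mcoeffZ mcoeffX eqxx mulr1.
rewrite big_seq_cond big1 ?addr0 // => m' /andP [m'H ne].
rewrite mcoeffZ mcoeffX; case: eqP => [/inj|]; last by rewrite mulr0.
by move=> /(_ m'H mH) E; rewrite E eqxx in ne.
Qed.

Definition phi (m : 'X_{1..3}) : 'X_{1..2} :=
  [multinom (if i == 0 :> nat then m i1 else m i2) | i < 2].
Definition psi (m : 'X_{1..3}) : 'X_{1..2} :=
  [multinom (if i == 0 :> nat then m i1 + m i2 else m i2)%N | i < 2].

Lemma X2 (m : 'X_{1..2}) : ('X_[m] : {mpoly C[2]}) = 'X_0 ^+ m 0 * 'X_1 ^+ m 1.
Proof. rewrite mpolyXE_id !big_ord_recl big_ord0 mulr1. have -> : (0 : 'I_2) = ord0 by exact: val_inj. have -> : (1 : 'I_2) = lift ord0 ord0 by exact: val_inj. done. Qed.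

Lemma X_t1 m : 'X_[m] \mPo t1 = 'X_[phi m].
Proof.
rewrite comp_mpolyX prod3 X2 !mnmE /=.
by rewrite /tnth /= expr1n mul1r.
Qed.

Lemma X_t2 m : 'X_[m] \mPo t2 = 'X_[psi m].
Proof.
rewrite comp_mpolyX prod3 X2 !mnmE /=.
by rewrite /tnth /= expr1n mul1r exprMn exprD mulrA.
Qed.

Lemma m3_eq (m m' : 'X_{1..3}) : mdeg m = 3%N -> mdeg m' = 3%N ->
  m i1 = m' i1 -> m i2 = m' i2 -> m = m'.
Proof.
rewrite !mdeg3 => d d' e1 e2; apply/mnmP => i.
have e0 : m i0 = m' i0 by lia.
case: i => [[|[|[|//]]] Hi].
- by rewrite (_ : Ordinal Hi = i0) //; exact: val_inj.
- by rewrite (_ : Ordinal Hi = i1) //; exact: val_inj.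
- by rewrite (_ : Ordinal Hi = i2) //; exact: val_inj.
Qed.


Lemma phi_inj (H : {mpoly C[3]}) : H \is 3.-homog -> {in msupp H &, injective phi}.
Proof.
move=> hH x y xH yH E.
have := congr1 (fun e : 'X_{1..2} => e ord0) E.
have := congr1 (fun e : 'X_{1..2} => e (lift ord0 ord0)) E.
rewrite !mnmE /= => e2 e1; apply: m3_eq => //.
  exact: (dhomogP _ _ _ hH x xH).
exact: (dhomogP _ _ _ hH y yH).
Qed.

Lemma psi_inj (H : {mpoly C[3]}) : H \is 3.-homog -> {in msupp H &, injective psi}.
Proof.
move=> hH x y xH yH E.
have := congr1 (fun e : 'X_{1..2} => e ord0) E.
have := congr1 (fun e : 'X_{1..2} => e (lift ord0 ord0)) E.
rewrite !mnmE /= => e2 e1; apply: m3_eq => //.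
- exact: (dhomogP _ _ _ hH x xH).
- exact: (dhomogP _ _ _ hH y yH).
- lia.
Qed.

Lemma unit3 (p u w : 'rV[C]_3) : basis3 p u w -> mx3 p u w \in unitmx.
Proof. by rewrite /basis3 unitmxE unitfE. Qed.

Lemma off_case (F : {mpoly C[3]}) (p u w : 'rV[C]_3) : homog_deg F 3 -> basis3 p u w ->
  (forall e : 'X_{1..2}, (affine_sub F p u w)@_e != 0 -> (5 <= e 0%R + e 1%R)%N) ->
  F = 0.
Proof.
move=> hF /unit3 uM h.
have hH := H_homog (mx3 p u w) (proj1 (homogE' F 3) hF).
suff H0 : F \mPo lin (mx3 p u w) = 0 by rewrite -(back F uM) H0 comp_mpoly0.
apply/mpolyP => m; rewrite mcoeff0; apply/eqP/negPn/negP => nz.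
have mH : m \in msupp (F \mPo lin (mx3 p u w)) by rewrite mcoeff_msupp.
have := h (phi m); rewrite affine_H (extract (@X_t1) (phi_inj hH) mH).
move=> /(_ nz); rewrite !mnmE /=.
have := dhomogP _ _ _ hH m mH; rewrite /= mdeg3.
lia.
Qed.

Definition m003 : 'X_{1..3} := [multinom (if i == 2 :> nat then 3 else 0)%N | i < 3].

Lemma one_case (F : {mpoly C[3]}) (a u w : 'rV[C]_3) : homog_deg F 3 ->
  (forall e : 'X_{1..2}, (blowup_sub F a u w)@_e != 0 ->
     (1 <= e 0%R)%N /\ (5 <= (e 0%R - 1) + e 1%R)%N) ->
  F \mPo lin (mx3 a u w) = (F \mPo lin (mx3 a u w))@_m003 *: 'X_[m003].
Proof.
move=> hF h.
have hH := H_homog (mx3 a u w) (proj1 (homogE' F 3) hF).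
apply/mpolyP => m; rewrite mcoeffZ mcoeffX.
case: (eqVneq m003 m) => [->|ne]; first by rewrite mulr1.
rewrite mulr0; apply/eqP/negPn/negP => nz.
have mH : m \in msupp (F \mPo lin (mx3 a u w)) by rewrite mcoeff_msupp.
have := h (psi m); rewrite blowup_H (extract (@X_t2) (psi_inj hH) mH).
move=> /(_ nz) []; rewrite !mnmE /= => l1 l2.
have := dhomogP _ _ _ hH m mH; rewrite /= mdeg3 => dm.
case/eqP: ne; apply: m3_eq.
- by rewrite mdeg3 !mnmE.
- exact: (dhomogP _ _ _ hH m mH).
- rewrite !mnmE /=; lia.
- rewrite !mnmE /=; lia.
Qed.

Lemma eval_lin (F : {mpoly C[3]}) (M : 'M[C]_3) (c : 'rV[C]_3) :
  (F \mPo lin M).@[fun i => c 0 i] = F.@[fun j => (c *m M) 0 j].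
Proof.
rewrite comp_mpoly_meval; apply: meval_eq => j.
rewrite tnth_mktuple raddf_sum mxE /=; apply: eq_bigr => i _.
by rewrite mevalZ mevalXU mulrC.
Qed.

End Aux.
Section LA.
Variable C : fieldType.
Implicit Types a b c u v w : 'rV[C]_3.

Lemma sub_col_l m1 m2 n (A : 'M[C]_(m1, n)) (B : 'M[C]_(m2, n)) : (A <= col_mx A B)%MS.
Proof. by rewrite -addsmxE addsmxSl. Qed.
Lemma sub_col_r m1 m2 n (A : 'M[C]_(m1, n)) (B : 'M[C]_(m2, n)) : (B <= col_mx A B)%MS.
Proof. by rewrite -addsmxE addsmxSr. Qed.

Lemma rank2 a b : \rank (col_mx a b) = \rank (a + b)%MS.
Proof. by rewrite addsmxE. Qed.

Lemma rank3 a b c : \rank (col_mx a (col_mx b c)) = \rank (a + (b + c))%MS.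
Proof.
apply: eqmx_rank; apply/andP; split.
  rewrite !col_mx_sub addsmxSl /=.
  rewrite !(submx_trans _ (addsmxSr a _)) ?addsmxSl ?addsmxSr //.
rewrite !addsmx_sub sub_col_l /=.
by rewrite !(submx_trans _ (sub_col_r a _)) ?sub_col_l ?sub_col_r.
Qed.

Lemma same_rank a u u' (c0 c1 : C) : indep2 a u -> u' = c0 *: a + c1 *: u ->
  \rank (col_mx a (col_mx u' u)) = 2%N.
Proof.
rewrite /indep2 rank2 => /eqP r2 ->; rewrite rank3 -[RHS]r2.
apply: eqmx_rank; apply/andP; split.
  rewrite !addsmx_sub addsmxSl addsmxSr andbT /=.
  by apply: addmx_sub_adds; apply: scalemx_sub.
rewrite addsmx_sub addsmxSl /=.
exact: (submx_trans (addsmxSr _ u) (addsmxSr a _)).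
Qed.

Lemma span_form a u v (c : 'cV[C]_3) : \rank (col_mx a (col_mx u v)) = 2%N ->
  indep2 a v -> a *m c = 0 -> v *m c = 0 -> u *m c = 0.
Proof.
rewrite /indep2 rank3 rank2 => r3 /eqP r2 ac vc.
have S : (a + v <= a + (u + v))%MS.
  rewrite addsmx_sub addsmxSl /=.
  exact: (submx_trans (addsmxSr u v) (addsmxSr a _)).
have S' : (a + (u + v) <= a + v)%MS.
  by rewrite -(mxrank_leqif_sup S) r2 r3.
have : (u <= a + v)%MS.
  apply: submx_trans S'; exact: (submx_trans (addsmxSl u v) (addsmxSr a _)).
rewrite addsmxE => /submxP [D ->].
by rewrite -mulmxA mul_col_mx ac vc col_mx0 mulmx0.
Qed.

Lemma kernel a v : indep2 a v ->
  exists c : 'cV[C]_3, [/\ c != 0, a *m c = 0 & v *m c = 0].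
Proof.
move=> /eqP r2.
set K := cokermx (col_mx a v).
have rK : \rank K = 1%N by rewrite mxrank_coker r2.
have [j cj] : exists j, col j K != 0.
  apply/existsP; apply: contraT; rewrite negb_exists => /forallP h.
  suff K0 : K = 0 by rewrite K0 mxrank0 in rK.
  apply/matrixP => i j; move/negPn/eqP: (h j) => /matrixP /(_ i 0).
  by rewrite !mxE.
exists (col j K); split => //.
  have := mulmx_coker (col_mx a v); rewrite -/K => E.
  have := congr1 (col j) E; rewrite colE -mulmxA -colE col0 mul_col_mx => /eqP.
  by rewrite col_mx_eq0 => /andP [/eqP -> _].
have := mulmx_coker (col_mx a v); rewrite -/K => E.
have := congr1 (col j) E; rewrite colE -mulmxA -colE col0 mul_col_mx => /eqP.
by rewrite col_mx_eq0 => /andP [_ /eqP ->].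
Qed.


Lemma mx3_col a b c : mx3 a b c = col_mx a (col_mx b c).
Proof.
apply/matrixP => i j; rewrite !mxE; case: splitP => k /= ik.
  by rewrite ik (ord1 k).
rewrite ik mxE; case: splitP => l /= kl.
  by rewrite kl (ord1 l).
by rewrite kl (ord1 l).
Qed.

Lemma basis_ext a u : indep2 a u -> exists w, basis3 a u w.
Proof.
move=> /eqP r2.
set A := col_mx a u.
have rAC : \rank A^C%MS = 1%N by rewrite mxrank_compl r2.
have [i ri] : exists i, row i A^C%MS != 0.
  apply/existsP; apply: contraT; rewrite negb_exists => /forallP h.
  suff K0 : A^C%MS = 0 by rewrite K0 mxrank0 in rAC.
  apply/matrixP => i j; move/negPn/eqP: (h i) => /matrixP /(_ 0 j).
  by rewrite !mxE.
exists (row i A^C%MS).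
rewrite /basis3 -unitfE -unitmxE -row_full_unit /row_full mx3_col rank3.
have cap0 : (A :&: row i A^C = 0)%MS.
  apply/eqP; rewrite -submx0 -(capmx_compl A).
  by apply: capmxS => //; apply: row_sub.
have rw : \rank (row i A^C%MS) = 1%N.
  apply/eqP; rewrite eqn_leq rank_leq_row lt0n mxrank_eq0 ri //.
have := mxrank_sum_cap A (row i A^C%MS).
rewrite cap0 mxrank0 addn0 rw r2 => E.
have <- : \rank (A + row i A^C)%MS = \rank (a + (u + row i A^C))%MS.
  apply: eqmx_rank; apply/andP; split.
    rewrite !addsmx_sub !col_mx_sub addsmxSl /=.
    rewrite !(submx_trans _ (addsmxSr a _)) ?addsmxSl ?addsmxSr //.
  rewrite !addsmx_sub addsmxSr andbT.
  rewrite (submx_trans (sub_col_l a u) (addsmxSl A _)) /=.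
  exact: (submx_trans (sub_col_r a u) (addsmxSl A _)).
by rewrite E.
Qed.

End LA.

Section Main.
Variable C : fieldType.
Implicit Types a b c u v w : 'rV[C]_3.

Lemma mulmx3 (c : 'rV[C]_3) a u w :
  c *m mx3 a u w = c 0 i0 *: a + c 0 i1 *: u + c 0 i2 *: w.
Proof.
apply/matrixP => i j; rewrite (ord1 i) !mxE big3 !mxE /=.
done.
Qed.

Lemma Xm003 : ('X_[m003] : {mpoly C[3]}) = 'X_i2 ^+ 3.
Proof. by rewrite mpolyXE_id prod3' !mnmE /= !expr0 !mul1r. Qed.

Lemma meval_m003 (h : C) (x : 'I_3 -> C) :
  (h *: ('X_[m003] : {mpoly C[3]})).@[x] = h * x i2 ^+ 3.
Proof. by rewrite mevalZ Xm003 rmorphXn /= mevalXU. Qed.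

Definition lform (c : 'cV[C]_3) : {mpoly C[3]} := \sum_(j < 3) c j 0 *: 'X_j.

Lemma lform_comp (c : 'cV[C]_3) M :
  lform c \mPo lin M = \sum_(i < 3) (M *m c) i 0 *: 'X_i.
Proof.
rewrite /lform raddf_sum /=.
under eq_bigr => j _ do rewrite comp_mpolyZ comp_mpolyXU -tnth_nth tnth_mktuple scaler_sumr.
rewrite exchange_big /=; apply: eq_bigr => i _.
rewrite mxE scaler_suml; apply: eq_bigr => j _.
by rewrite scalerA mulrC.
Qed.

Lemma lform_comp3 (c : 'cV[C]_3) a u w : a *m c = 0 -> u *m c = 0 ->
  lform c \mPo lin (mx3 a u w) = (w *m c) 0 0 *: 'X_i2.
Proof.
move=> ac uc; rewrite lform_comp big3.
have E : forall (x : 'rV[C]_3) (i : 'I_3) (k : 'I_1), (forall j, mx3 a u w i j = x 0 j) ->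
    (mx3 a u w *m c) i k = (x *m c) 0 k.
  by move=> x i k hx; rewrite !mxE; apply: eq_bigr => j _; rewrite hx.
rewrite (E a i0) ?(E u i1) ?(E w i2); try by move=> j; rewrite mxE.
by rewrite ac uc !mxE !scale0r !add0r.
Qed.

Lemma lform_homog (c : 'cV[C]_3) : lform c \is 1.-homog.
Proof.
apply: rpred_sum => i _; apply: rpredZ.
by rewrite dhomogX; apply/eqP; apply: mdeg1.
Qed.

Lemma lform_neq0 (c : 'cV[C]_3) : c != 0 -> lform c != 0.
Proof.
move=> c0; have [j cj] : exists j, c j 0 != 0.
  apply/existsP; apply: contraT; rewrite negb_exists => /forallP h.
  case/eqP: c0; apply/matrixP => i k; rewrite (ord1 k) mxE.
  by move: (h i); rewrite negbK => /eqP.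
apply: contraNneq cj => /(congr1 (mcoeff U_(j)%MM)).
rewrite mcoeff0 /lform raddf_sum /= (bigD1 j) //= mcoeffZ mcoeffXU eqxx mulr1.
rewrite big1 ?addr0; first by move=> ->.
move=> i ne.
by rewrite mcoeffZ mcoeffXU (negPf ne) mulr0.
Qed.

Lemma forward_poly a (c : 'cV[C]_3) : c != 0 -> a *m c = 0 ->
  [/\ lform c ^+ 3 != 0, homog_deg (lform c ^+ 3) (3 * 1) &
   forall u w, u *m c = 0 ->
     lform c ^+ 3 \mPo lin (mx3 a u w) = ((w *m c) 0 0) ^+ 3 *: 'X_[m003]].
Proof.
move=> c0 ac; split.
- by rewrite expf_neq0 // lform_neq0.
- apply/homogE'; exact: (dhomogMn 3 (lform_homog c)).
- move=> u w uc; rewrite rmorphXn /= lform_comp3 // Xm003.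
  by rewrite exprZn.
Qed.

Lemma no_d0 a (Z : seq (spt C)) m : (1 <= m)%N -> Z <> [::] -> ~ has_div a Z m 0.
Proof.
move=> m1 Z0 [F [[F0 [hF _]] hZ]].
have FC : F = (F@_0%MM)%:MP.
  apply/mpolyP => e; rewrite mcoeffC.
  case: (eqVneq e 0%MM) => [->|ne]; first by rewrite mulr1.
  rewrite mulr0; apply/eqP/negPn/negP => /hF /eqP; rewrite muln0 mdeg_eq0.
  by rewrite (negPf ne).
have c0 : F@_0%MM != 0 by apply: contraNneq F0 => e; rewrite FC e.
case: Z Z0 hZ => // z Z' _ hZ.
have := hZ z (or_introl erefl); clear hZ; case: z => [p [u [w [_ h]]] | u [w [_ h]]].
  have := h 0%MM; rewrite /affine_sub FC comp_mpolyC mcoeffC eqxx mulr1 => /(_ c0).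
  by rewrite !mnm0E; lia.
have := h 0%MM; rewrite /blowup_sub FC comp_mpolyC mcoeffC eqxx mulr1 => /(_ c0).
by rewrite !mnm0E; lia.
Qed.


Lemma eval_H (F : {mpoly C[3]}) M (h : C) (x : 'rV[C]_3) : M \in unitmx ->
  F \mPo lin M = h *: 'X_[m003] ->
  F.@[fun j => x 0 j] = h * ((x *m invmx M) 0 i2) ^+ 3.
Proof.
move=> uM E; have := eval_lin F M (x *m invmx M).
by rewrite E meval_m003 mulmxKV.
Qed.

Lemma backward a (Z : seq (spt C)) : Z <> [::] ->
  (forall z, List.In z Z -> valid_pt a z) -> has_div a Z 5 1 ->
  exists v, valid_pt a (OnE v) /\ forall z, List.In z Z -> same_pt a z (OnE v).
Proof.
move=> Z0 val [F [[F0 [hF _]] hZ]].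
have key : forall z, List.In z Z -> exists u w (h : C),
    [/\ z = OnE u, mx3 a u w \in unitmx, h != 0 &
        F \mPo lin (mx3 a u w) = h *: 'X_[m003]].
  move=> z zZ; move: (hZ z zZ); case: z {zZ} => [p [u [w [b h]]] | u [w [b h]]].
    by case/eqP: F0; apply: (off_case hF b h).
  have E := one_case hF h.
  exists u, w, ((F \mPo lin (mx3 a u w))@_m003); split => //; first exact: unit3.
  apply: contraNneq F0 => h0.
  by rewrite -(back F (unit3 b)) E h0 scale0r comp_mpoly0.
case: Z Z0 hZ val key => // z0 Z' _ hZ val key.
have [u0 [w0 [h0 [E1 uM0 h0n E0]]]] := key z0 (or_introl erefl).
exists u0; split; first by rewrite -E1; exact: val _ (or_introl erefl).
have vu0 : indep2 a u0 by move: (val _ (or_introl erefl)); rewrite E1.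
move=> z zZ; have [u [w [h [-> uM hn E]]]] := key z zZ.
rewrite /=.
set c := u *m invmx (mx3 a u0 w0).
have ev0 := eval_H u uM0 E0.
have ev := eval_H u uM E.
have e1 : u *m invmx (mx3 a u w) = delta_mx 0 i1.
  have Ed : delta_mx 0 i1 *m mx3 a u w = u.
    rewrite mulmx3 !mxE /=.
    by rewrite !scale0r scale1r add0r addr0.
  by rewrite -{1}Ed mulmxK.
rewrite e1 mxE /= expr0n /= mulr0 in ev.
have c2 : c 0 i2 = 0.
  apply/eqP; move: ev0; rewrite ev => /eqP.
  by rewrite eq_sym mulf_eq0 (negPf h0n) expf_eq0 /=.
have Eu : u = c 0 i0 *: a + c 0 i1 *: u0.
  by rewrite -{1}(mulmxKV uM0 u) -/c mulmx3 c2 scale0r addr0.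
exact: (same_rank vu0 Eu).
Qed.

End Main.

Theorem theorem1 (R : realType) (a : 'rV[R[i]]_3) (Z : seq (spt R[i])) :
  a != 0 ->
  (forall z, List.In z Z -> valid_pt a z) ->
  Z <> [::] ->
  ((exists v : 'rV[R[i]]_3, valid_pt a (OnE v) /\
      forall z, List.In z Z -> same_pt a z (OnE v))
   <->
   (forall m : nat, (1 <= m <= 5)%N -> alpha_eq a Z m 1)).
Proof.
move=> _ val Z0; split; last first.
  by move=> h; apply: backward => //; case: (h 5%N isT).
case=> v [vv hv] m /andP [m1 m5]; split; last first.
  by move=> d; rewrite ltnS leqn0 => /eqP ->; apply: no_d0.
have [c [c0 ac vc]] := kernel vv.
have [F0 hF Ecomp] := forward_poly c0 ac.
exists (lform c ^+ 3); split.
  split => //; split => //.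
  have [w b] := basis_ext vv.
  exists v, w; split => // e; rewrite affine_H Ecomp // comp_mpolyZ X_t1.
  rewrite mcoeffZ mcoeffX; case: (eqVneq (phi m003) e) => [<-|_]; last by rewrite mulr0 eqxx.
  by rewrite !mnmE.
move=> z zZ; have := hv z zZ; have := val z zZ.
case: z {zZ} => [p _ //| u vu /= r].
have uc := span_form r vv ac vc.
have [w b] := basis_ext vu.
exists w; split => // e; rewrite blowup_H Ecomp // comp_mpolyZ X_t2.
rewrite mcoeffZ mcoeffX; case: (eqVneq (psi m003) e) => [<-|_]; last by rewrite mulr0 eqxx.
by rewrite !mnmE /=; lia.
Qed.
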